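(* Let $L\ge1$ be an integer and $h(x)=\mathrm{sech}\big((2L+1)\,\mathrm{arcsech}(x)\big)$. Then $h$ is monotonically increasing and convex on the interval $(0,1)$. *)

(* Defs.v *)
From Stdlib Require Import Reals.
Open Scope R_scope.

Definition sech (y : R) : R := / cosh y.

Definition arcsech (x : R) : R := ln ((1 + sqrt (1 - x ^ 2)) / x).

Definition h (L : nat) (x : R) : R := sech ((2 * INR L + 1) * arcsech x).

(* Main.v *)
Require Import Defs.
From Stdlib Require Import Reals.
From Stdlib Require Import Lra Lia Psatz.
From Coquelicot Require Import Coquelicot.
Open Scope R_scope.

Lemma cosh_pos v : 0 < cosh v.
Proof. unfold cosh. pose proof (exp_pos v). pose proof (exp_pos (-v)). lra. Qed.

Lemma ch_sh v : cosh v ^ 2 = 1 + sinh v ^ 2.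
Proof.
unfold cosh, sinh. rewrite exp_Ropp. pose proof (exp_pos v). field. lra.
Qed.

Lemma sinh_pos v : 0 < v -> 0 < sinh v.
Proof. intros. rewrite <- sinh_0. apply sinh_lt; auto. Qed.

Lemma sinh_nonneg v : 0 <= v -> 0 <= sinh v.
Proof. intros [H|H]. left; now apply sinh_pos. subst; rewrite sinh_0; lra. Qed.

Lemma incr_lemma (f f' : R -> R) (lo : R) :
  (forall t, lo <= t -> derivable_pt_lim f t (f' t)) ->
  (forall t, lo <= t -> 0 <= f' t) ->
  forall x y, lo <= x -> x <= y -> f x <= f y.
Proof.
intros Hd Hp x y Hx [Hxy|Hxy].
- destruct (MVT_cor2 f f' x y Hxy) as [c [Hc1 Hc2]].
  + intros c Hc. apply Hd. lra.
  + assert (0 <= f' c) by (apply Hp; lra).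
    assert (0 <= f' c * (y - x)) by (apply Rmult_le_pos; lra). lra.
- subst; lra.
Qed.

Lemma cosh_lt x y : 0 <= x -> x < y -> cosh x < cosh y.
Proof.
intros Hx Hxy.
destruct (MVT_cor2 cosh sinh x y Hxy) as [c [Hc1 Hc2]].
+ intros c Hc. apply derivable_pt_lim_cosh.
+ assert (0 < sinh c) by (apply sinh_pos; lra).
  assert (0 < sinh c * (y - x)) by (apply Rmult_lt_0_compat; lra). lra.
Qed.

Lemma vc_ge_s v : 0 <= v -> sinh v <= v * cosh v.
Proof.
intros Hv.
assert (H : 0 * cosh 0 - sinh 0 <= v * cosh v - sinh v).
{ apply (incr_lemma (fun v => v * cosh v - sinh v) (fun v => v * sinh v) 0); try lra.
  - intros t _. apply is_derive_Reals. unfold cosh, sinh.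
    auto_derive. auto. field.
  - intros t Ht. apply Rmult_le_pos; auto. now apply sinh_nonneg. }
rewrite sinh_0 in H. lra.
Qed.

Definition gfun (v : R) := v * (1 - sinh v ^ 2) / (sinh v * cosh v).

Lemma gfun_decr u w : 0 < u -> u <= w -> gfun w <= gfun u.
Proof.
intros Hu Huw.
assert (H := incr_lemma (fun v => - gfun v)
  (fun v => - ((((1 - sinh v ^ 2) - 2 * v * sinh v * cosh v) * (sinh v * cosh v)
            - v * (1 - sinh v ^ 2) * (cosh v ^ 2 + sinh v ^ 2)) / (sinh v * cosh v) ^ 2)) u).
enough (- gfun u <= - gfun w) by lra.
apply H; try lra.
- intros t Ht. apply is_derive_Reals. unfold gfun.
  assert (0 < sinh t) by (apply sinh_pos; lra).
  assert (0 < cosh t) by apply cosh_pos.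
  revert H0 H1. unfold cosh, sinh. intros H0 H1.
  auto_derive. nra. field. nra.
- intros t Ht.
  assert (0 < sinh t) by (apply sinh_pos; lra).
  assert (0 < cosh t) by apply cosh_pos.
  assert (Hc := ch_sh t). assert (Hv := vc_ge_s t ltac:(lra)).
  set (s := sinh t) in *. set (c := cosh t) in *.
  enough (((1 - s ^ 2) - 2 * t * s * c) * (s * c) - t * (1 - s ^ 2) * (c ^ 2 + s ^ 2) <= 0).
  { assert (0 < (s*c)^2) by (apply pow_lt; nra).
    enough ((((1 - s ^ 2) - 2 * t * s * c) * (s * c) - t * (1 - s ^ 2) * (c ^ 2 + s ^ 2))/ (s * c) ^ 2 <= 0) by lra.
    apply Rmult_le_0_r; auto. left; apply Rinv_0_lt_compat; auto. }
  assert (E : ((1 - s ^ 2) - 2 * t * s * c) * (s * c) - t * (1 - s ^ 2) * (c ^ 2 + s ^ 2)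
             = s * c * (1 - s^2) - t * (1 + 3 * s^2)).
  { transitivity (s * c * (1 - s^2) - t * (1 + 3 * s^2) - t * (1 + s^2) * (c^2 - 1 - s^2)).
    ring. rewrite Hc. ring. }
  rewrite E.
  assert (s * (1 + 3 * s^2) <= t * c * (1 + 3 * s^2)) by (apply Rmult_le_compat_r; nra).
  assert (s * c^2 * (1 - s^2) <= s * (1 + 3 * s^2)).
  { rewrite Hc. assert (0 <= s^3) by (apply pow_le; lra). assert (0 <= s^5) by (apply pow_le; lra).
    replace (s * (1 + s^2) * (1 - s^2)) with (s * (1 + 3 * s^2) - (3 * s^3 + s^5)) by ring. lra. }
  assert (c * (s * c * (1 - s^2)) <= c * (t * (1 + 3 * s^2))) by nra.
  apply Rmult_le_reg_l in H4; lra.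
Qed.

Definition fF (v : R) := sinh v / cosh v ^ 2.
Definition fp (v : R) := (cosh v ^ 2 - 2 * sinh v ^ 2) / cosh v ^ 3.
Definition Qf (n u : R) := n * fF (n * u) / fF u.

Lemma fp_eq v : fp v = (1 - sinh v ^ 2) / cosh v ^ 3.
Proof. unfold fp. rewrite ch_sh. replace (1 + sinh v ^ 2 - 2 * sinh v ^ 2) with (1 - sinh v ^ 2) by ring. reflexivity. Qed.

Lemma Qf_decr n u w : 1 <= n -> 0 < u -> u <= w -> Qf n w <= Qf n u.
Proof.
intros Hn Hu Huw.
enough (- Qf n u <= - Qf n w) by lra.
apply (incr_lemma (fun v => - Qf n v)
  (fun u => - (n * (n * fp (n * u) * fF u - fF (n * u) * fp u) / (fF u) ^ 2)) u); try lra.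
- intros t Ht. apply is_derive_Reals. unfold Qf, fF, fp.
  assert (0 < sinh t) by (apply sinh_pos; lra).
  assert (0 < cosh t) by apply cosh_pos.
  assert (0 < sinh (n*t)) by (apply sinh_pos; nra).
  assert (0 < cosh (n*t)) by apply cosh_pos.
  revert H H0 H1 H2. unfold cosh, sinh. intros H H0 H1 H2.
  auto_derive. repeat split; try (repeat (apply Rmult_integral_contrapositive_currified || apply Rinv_neq_0_compat); nra).
  field. nra.
- intros t Ht.
  assert (Hs : 0 < sinh t) by (apply sinh_pos; lra).
  assert (Hc : 0 < cosh t) by apply cosh_pos.
  assert (HS : 0 < sinh (n*t)) by (apply sinh_pos; nra).
  assert (HC : 0 < cosh (n*t)) by apply cosh_pos.
  assert (Hg := gfun_decr t (n * t) ltac:(lra) ltac:(nra)).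
  unfold gfun in Hg.
  rewrite !fp_eq. unfold fF.
  set (s := sinh t) in *. set (c := cosh t) in *.
  set (S := sinh (n*t)) in *. set (C := cosh (n*t)) in *.
  clearbody s c S C.
  assert (AB : n * (1 - S^2) * s * c <= S * C * (1 - s^2)).
  { replace (n * (1 - S^2) * s * c) with ((n * t * (1 - S ^ 2) / (S * C)) * (S * C * s * c / t)) by (field; lra).
    replace (S * C * (1 - s^2)) with ((t * (1 - s ^ 2) / (s * c)) * (S * C * s * c / t)) by (field; lra).
    apply Rmult_le_compat_r; auto.
    left. apply Rdiv_lt_0_compat; [|lra].
    apply Rmult_lt_0_compat; [apply Rmult_lt_0_compat; [apply Rmult_lt_0_compat|]|]; assumption. }
  enough (n * (n * ((1 - S ^ 2) / C ^ 3) * (s / c ^ 2) - S / C ^ 2 * ((1 - s ^ 2) / c ^ 3)) / (s / c ^ 2) ^ 2 <= 0) by lra.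
  replace (n * (n * ((1 - S ^ 2) / C ^ 3) * (s / c ^ 2) - S / C ^ 2 * ((1 - s ^ 2) / c ^ 3)) / (s / c ^ 2) ^ 2)
    with ((n * (1 - S^2) * s * c - S * C * (1 - s^2)) * (n * c ^ 4 / (C^3 * c^3 * s^2))) by (field; lra).
  apply Rmult_le_0_r; try lra.
  left. apply Rmult_lt_0_compat. apply Rmult_lt_0_compat; [lra|]. apply pow_lt; lra.
  apply Rinv_0_lt_compat. repeat apply Rmult_lt_0_compat; try apply pow_lt; lra.
Qed.

Lemma cauchy (f g f' g' : R -> R) a b : a < b ->
  (forall c, a <= c <= b -> derivable_pt_lim f c (f' c)) ->
  (forall c, a <= c <= b -> derivable_pt_lim g c (g' c)) ->
  exists c, a < c < b /\ (g b - g a) * f' c = (f b - f a) * g' c.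
Proof.
intros Hab Hf Hg.
destruct (MVT_cor2 (fun t => (g b - g a) * f t - (f b - f a) * g t)
  (fun t => (g b - g a) * f' t - (f b - f a) * g' t) a b Hab) as [c [Hc1 Hc2]].
- intros c Hc. apply is_derive_Reals.
  apply (is_derive_minus (fun t => (g b - g a) * f t) (fun t => (f b - f a) * g t));
  apply is_derive_scal; apply is_derive_Reals; auto.
- exists c. split; auto.
  assert (((g b - g a) * f' c - (f b - f a) * g' c) * (b - a) = 0) by (rewrite <- Hc1; ring).
  apply Rmult_integral in H. destruct H; lra.
Qed.

Lemma slope n a b : 1 <= n -> 0 < b < a -> exists xi, b < xi < a /\
  / cosh (n * a) - / cosh (n * b) = (/ cosh a - / cosh b) * Qf n xi.
Proof.
intros Hn Hab.
destruct (cauchy (fun u => / cosh u) (fun u => / cosh (n * u)) (fun u => - fF u)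
   (fun u => - (n * fF (n * u))) b a ltac:(lra)) as [xi [Hxi E]].
- intros c _. apply is_derive_Reals. unfold fF.
  assert (0 < cosh c) by apply cosh_pos. revert H. unfold cosh, sinh. intros H.
  auto_derive. lra. field. lra.
- intros c _. apply is_derive_Reals. unfold fF.
  assert (0 < cosh (n*c)) by apply cosh_pos. revert H. unfold cosh, sinh. intros H.
  auto_derive. lra. field. lra.
- exists xi. split; auto. unfold Qf.
  assert (0 < fF xi). { unfold fF. apply Rdiv_lt_0_compat. apply sinh_pos; lra. apply pow_lt, cosh_pos. }
  apply (Rmult_eq_reg_r (- fF xi)); [|lra].
  rewrite E. field. pose proof (cosh_pos a); pose proof (cosh_pos b); repeat split; lra.
Qed.

Lemma arcsech_facts x : 0 < x < 1 -> 0 < arcsech x /\ / cosh (arcsech x) = x.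
Proof.
intros Hx. unfold arcsech.
assert (H1 : 0 < 1 - x ^ 2) by nra.
set (r := sqrt (1 - x ^ 2)).
assert (Hr : 0 < r) by (apply sqrt_lt_R0; auto).
assert (Hr2 : r ^ 2 = 1 - x ^ 2) by (unfold r; rewrite <- Rsqr_pow2; apply Rsqr_sqrt; lra).
assert (Hw : 1 < (1 + r) / x).
{ apply (Rmult_lt_reg_r x); [lra|]. unfold Rdiv. rewrite Rmult_assoc, Rinv_l; lra. }
split.
- rewrite <- ln_1. apply ln_increasing; lra.
- unfold cosh. rewrite exp_Ropp, exp_ln by lra.
  field_simplify; try (split; lra).
  replace (x ^ 2) with (1 - r ^ 2) by lra. field. nra.
Qed.

Lemma arcsech_decr x y : 0 < x -> x < y < 1 -> arcsech y < arcsech x.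
Proof.
intros Hx Hy. unfold arcsech.
assert (Hs : sqrt (1 - y ^ 2) <= sqrt (1 - x ^ 2)) by (apply sqrt_le_1_alt; nra).
assert (0 <= sqrt (1 - y ^ 2)) by apply sqrt_pos.
apply ln_increasing.
- apply Rdiv_lt_0_compat; lra.
- apply Rle_lt_trans with ((1 + sqrt (1 - x ^ 2)) / y).
  + unfold Rdiv. apply Rmult_le_compat_r. left; apply Rinv_0_lt_compat; lra. lra.
  + unfold Rdiv. apply Rmult_lt_compat_l. lra. apply Rinv_lt_contravar; nra.
Qed.

Lemma h_eq L x : h L x = / cosh ((2 * INR L + 1) * arcsech x).
Proof. reflexivity. Qed.

Lemma core n (Hn : 1 <= n) x y t : 0 < x -> x < y -> y < 1 -> 0 <= t <= 1 ->
  / cosh (n * arcsech (t * x + (1 - t) * y)) <=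
  t * / cosh (n * arcsech x) + (1 - t) * / cosh (n * arcsech y).
Proof.
intros Hx Hxy Hy Ht.
destruct (Req_dec t 0) as [->|Ht0].
{ replace (0 * x + (1 - 0) * y) with y by ring. lra. }
destruct (Req_dec t 1) as [->|Ht1].
{ replace (1 * x + (1 - 1) * y) with x by ring. lra. }
assert (Ht' : 0 < t < 1) by lra.
set (z := t * x + (1 - t) * y).
assert (Hz : x < z < y) by (unfold z; nra).
destruct (arcsech_facts x ltac:(lra)) as [Ax Ex].
destruct (arcsech_facts y ltac:(lra)) as [Ay Ey].
destruct (arcsech_facts z ltac:(lra)) as [Az Ez].
assert (Dxz := arcsech_decr x z ltac:(lra) ltac:(lra)).
assert (Dzy := arcsech_decr z y ltac:(lra) ltac:(lra)).
destruct (slope n (arcsech x) (arcsech z) Hn ltac:(lra)) as [xi1 [Hxi1 E1]].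
destruct (slope n (arcsech z) (arcsech y) Hn ltac:(lra)) as [xi2 [Hxi2 E2]].
assert (HQ := Qf_decr n xi2 xi1 Hn ltac:(lra) ltac:(lra)).
rewrite Ex, Ez in E1. rewrite Ez, Ey in E2.
set (hx := / cosh (n * arcsech x)) in *.
set (hy := / cosh (n * arcsech y)) in *.
set (hz := / cosh (n * arcsech z)) in *.
set (Q1 := Qf n xi1) in *. set (Q2 := Qf n xi2) in *.
clearbody hx hy hz Q1 Q2.
assert (hx = hz + (x - z) * Q1) by lra.
assert (hy = hz + (y - z) * Q2) by lra.
subst hx hy.
assert (E : t*(x-z)*Q1 + (1-t)*(y-z)*Q2 = t*(1-t)*(y-x)*(Q2-Q1)) by (unfold z; ring).
replace (t * (hz + (x - z) * Q1) + (1 - t) * (hz + (y - z) * Q2))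
  with (hz + (t*(x-z)*Q1 + (1-t)*(y-z)*Q2)) by ring.
rewrite E.
assert (0 <= t * (1 - t) * (y - x) * (Q2 - Q1)).
{ repeat apply Rmult_le_pos; lra. }
lra.
Qed.

Theorem proposition3 (L : nat) (HL : (1 <= L)%nat) :
  (forall x y : R, 0 < x < 1 -> 0 < y < 1 -> x < y -> h L x < h L y) /\
  (forall x y t : R, 0 < x < 1 -> 0 < y < 1 -> 0 <= t <= 1 ->
     h L (t * x + (1 - t) * y) <= t * h L x + (1 - t) * h L y).
Proof.
assert (Hn : 1 <= 2 * INR L + 1) by (pose proof (pos_INR L); lra).
set (n := 2 * INR L + 1) in *.
split.
- intros x y Hx Hy Hxy. rewrite !h_eq. fold n.
  destruct (arcsech_facts y Hy) as [Ay _].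
  assert (D := arcsech_decr x y ltac:(lra) ltac:(lra)).
  assert (Hc : cosh (n * arcsech y) < cosh (n * arcsech x)) by (apply cosh_lt; nra).
  apply Rinv_lt_contravar; auto.
  apply Rmult_lt_0_compat; apply cosh_pos.
- intros x y t Hx Hy Ht. rewrite !h_eq. fold n.
  destruct (Rtotal_order x y) as [Hxy|[Hxy|Hxy]].
  + apply core; lra.
  + subst y. replace (t * x + (1 - t) * x) with x by ring. lra.
  + replace (t * x + (1 - t) * y) with ((1 - t) * y + (1 - (1 - t)) * x) by ring.
    assert (H := core n Hn y x (1 - t) ltac:(lra) ltac:(lra) ltac:(lra) ltac:(lra)).
    replace (1 - (1 - t)) with t in * by ring. lra.
Qed.
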